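(* Consider day-ahead prices $\boldsymbol{P}=(P_0,\dots,P_H)$ with $H\ge 2$, a storage of capacity $\kappa>0$ and efficiency $\eta\in(0,1]$, and the admissible bid vectors consisting of the zero vector and the vectors $\vec a(b,s)\in\mathbb{R}^{H+1}$ for hours $b<s$, with $a_b=\kappa/\eta$, $a_s=-\eta\kappa$ and $a_h=0$ otherwise. For a predictive distribution $\mathcal{F}$ of the prices, let $\boldsymbol F\sim\mathcal F$ and let $\mathcal{P}^{\vec a}_{\mathcal F}$ denote the distribution of the forecasted revenue $-\vec a^{\top}\boldsymbol F$. Let $\rho$ be any risk measure that depends on a revenue only through its distribution, and let the battery trading strategy choose $\vec a^*_{\mathcal F}\in\arg\max_{\vec a}\rho(\mathcal{P}^{\vec a}_{\mathcal F})$ (with a fixed tie-breaking rule), with realized revenue $-(\vec a^*_{\mathcal F})^{\top}\vec p$ for realized prices $\vec p$. Then there exist a true distribution $\mathcal F_1$ and a different forecast distribution $\mathcal F_2\neq\mathcal F_1$ such that $\rho(\mathcal{P}^{\vec a}_{\mathcal F_1})=\rho(\mathcal{P}^{\vec a}_{\mathcal F_2})$ for all admissible $\vec a$, so that the ranking of all bid pairs $(b,s)$ and the chosen optimal bid coincide. In particular, the score $S(\mathcal F,\vec p)=(\vec a^*_{\mathcal F})^{\top}\vec p$ (negative realized revenue) is not a strictly proper scoring rule.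
   Context: A scoring rule $S(\mathcal F,x)$ (lower is better) is proper if $\mathbb{E}_{x\sim\mathcal D}[S(\mathcal D,x)]\le\mathbb{E}_{x\sim\mathcal D}[S(\mathcal F,x)]$ for all forecasts $\mathcal F$ and true distributions $\mathcal D$, and strictly proper if equality holds only for $\mathcal F=\mathcal D$. *)

(* Defs.v *)
From HB Require Import structures.
From mathcomp Require Import all_boot all_order all_algebra.
From mathcomp Require Import all_classical all_reals all_analysis.
Set Implicit Arguments. Unset Strict Implicit. Unset Printing Implicit Defensive.
Import Order.TTheory GRing.Theory Num.Theory.
Local Open Scope ring_scope.

(* Price vectors (P_0,...,P_H) are (H.+1)-tuples of reals; the tuple type
   carries the product sigma-algebra generated by the coordinate maps. *)
Notation prices H R := ((H.+1).-tuple R).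

Definition pairbid (H : nat) := {bs : 'I_(H.+1) * 'I_(H.+1) | (bs.1 < bs.2)%N}.

(* Admissible bids: None is the zero vector, Some (b,s) is a(b,s). *)
Definition bid (H : nat) := option (pairbid H).

Definition avec (R : realType) (H : nat) (kappa eta : R) (a : bid H)
  : 'I_(H.+1) -> R :=
  fun h => match a with
           | None => 0
           | Some bs => let b := (sval bs).1 in let s := (sval bs).2 in
               if h == b then kappa / eta
               else if h == s then - (eta * kappa) else 0
           end.

Definition dotp (R : realType) (H : nat) (kappa eta : R) (a : bid H)
  (p : prices H R) : R :=
  \sum_(h < H.+1) avec kappa eta a h * tnth p h.

Definition revenue (R : realType) (H : nat) (kappa eta : R) (a : bid H)
  (p : prices H R) : R := - dotp kappa eta a p.

Definition revdist (R : realType) (H : nat) (kappa eta : R)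
  (F : probability (prices H R) R) (a : bid H) : set R -> \bar R :=
  pushforward F (revenue kappa eta a).

(* A (fixed) tie-breaking argmax selection on the finite set of bids. *)
Definition is_argmax_selection (R : realType) (H : nat)
  (sel : (bid H -> \bar R) -> bid H) : Prop :=
  forall f : bid H -> \bar R, forall a : bid H, (f a <= f (sel f))%E.

Definition astar (R : realType) (H : nat) (kappa eta : R)
  (rho : (set R -> \bar R) -> \bar R) (sel : (bid H -> \bar R) -> bid H)
  (F : probability (prices H R) R) : bid H :=
  sel (fun a => rho (revdist kappa eta F a)).

Definition battery_score (R : realType) (H : nat) (kappa eta : R)
  (rho : (set R -> \bar R) -> \bar R) (sel : (bid H -> \bar R) -> bid H)
  (F : probability (prices H R) R) (p : prices H R) : R :=
  dotp kappa eta (astar kappa eta rho sel F) p.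

(* Strict propriety (lower is better) over all probability distributions
   on price vectors. *)
Definition strictly_proper (R : realType) (H : nat)
  (S : probability (prices H R) R -> prices H R -> R) : Prop :=
  forall D F : probability (prices H R) R,
    (\int[D]_x (S D x)%:E <= \int[D]_x (S F x)%:E)%E /\
    ((\int[D]_x (S D x)%:E = \int[D]_x (S F x)%:E)%E ->
       (F : set (prices H R) -> \bar R) = D).

(* Main.v *)
Require Import Defs.
From HB Require Import structures.
From mathcomp Require Import all_boot all_order all_algebra.
From mathcomp Require Import all_classical all_reals all_analysis.
From mathcomp Require Import ring lra.
Import Order.TTheory GRing.Theory Num.Theory.
Local Open Scope ring_scope.
Local Open Scope classical_set_scope.

Section mix.
Context d (T : measurableType d) (R : realType) (x y : T).
Let h : {nonneg R} := (2^-1)%:nng.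
Let m := measure_add (mscale h (@dirac _ T x R)) (mscale h (@dirac _ T y R)).
Definition mix (A : set T) : \bar R := m A.
Let mix0 : mix set0 = 0%E. Proof. exact: measure0. Qed.
Let mix_ge0 A : (0 <= mix A)%E. Proof. exact: measure_ge0. Qed.
Let mix_sa : semi_sigma_additive mix. Proof. exact: measure_semi_sigma_additive. Qed.
HB.instance Definition _ := isMeasure.Build _ _ _ mix mix0 mix_ge0 mix_sa.
Let mix_setT : mix setT = 1%E.
Proof.
rewrite /mix /m measure_addE /mscale /=. rewrite /mscale /= !diracT. 
rewrite -EFinD; congr EFin; rewrite /h /= mulr1; by field. 
Qed.
HB.instance Definition _ := Measure_isProbability.Build _ _ _ mix mix_setT.
Lemma mixE A : mix A = ((2^-1)%:E * \d_x A + (2^-1)%:E * \d_y A)%E.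
Proof. by rewrite /mix /m measure_addE. Qed.
End mix.

Lemma dotp_some (R : realType) (H : nat) (kappa eta : R) (bs : pairbid H)
  (p : prices H R) :
  dotp kappa eta (Some bs) p =
  kappa / eta * tnth p (sval bs).1 - eta * kappa * tnth p (sval bs).2.
Proof.
case: bs => [[b s] /= hbs].
have sb : s != b by rewrite gt_eqF.
rewrite /dotp (bigD1 b) //= eqxx (bigD1 s) //= (negbTE sb) eqxx big1.
  by rewrite addr0 mulNr.
by move=> h /andP[/negbTE -> /negbTE ->]; rewrite mul0r.
Qed.

Lemma dotp_none (R : realType) (H : nat) (kappa eta : R) (p : prices H R) :
  dotp kappa eta None p = 0.
Proof. by rewrite /dotp big1 // => h _; rewrite mul0r. Qed.

Section main.
Variables (R : realType) (H : nat) (kappa eta : R).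
Hypotheses (hkappa : 0 < kappa) (heta0 : 0 < eta).

Definition uu : prices H R := [tuple (if i == ord_max then 1 else 0) | i < H.+1].
Definition zz : prices H R := [tuple (if i == ord_max then 1 else eta ^+ 2) | i < H.+1].
Definition vv : prices H R := [tuple (tnth uu i + tnth zz i) | i < H.+1].
Definition oo : prices H R := [tuple (0 : R) | i < H.+1].

Lemma rev_lin a : revenue kappa eta a vv = revenue kappa eta a uu + revenue kappa eta a zz.
Proof.
rewrite /revenue /dotp -opprD -big_split /=; congr (- _).
by apply: eq_bigr => i _; rewrite tnth_mktuple mulrDr.
Qed.

Lemma rev_o a : revenue kappa eta a oo = 0.
Proof.
rewrite /revenue /dotp big1 ?oppr0 // => i _; by rewrite tnth_mktuple mulr0.
Qed.

Lemma rev_uz a : revenue kappa eta a uu = 0 \/ revenue kappa eta a zz = 0.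
Proof.
case: a => [bs|]; last by left; rewrite /revenue dotp_none oppr0.
case: bs => [[b s] /= hbs].
rewrite /revenue !dotp_some /=.
have bn : b != ord_max.
  by rewrite -(inj_eq val_inj) /= neq_ltn (leq_trans hbs) // -ltnS.
rewrite /uu /zz !tnth_mktuple (negbTE bn).
have [es|sn] := eqVneq s ord_max.
  right; rewrite mulr1; apply/eqP; rewrite oppr_eq0 subr_eq0; apply/eqP.
  field; exact: lt0r_neq0.
by left; rewrite !mulr0 subr0 oppr0.
Qed.

Definition F1 := @mix _ _ R oo vv.
Definition F2 := @mix _ _ R uu zz.

Lemma revdistE a : revdist kappa eta F1 a = revdist kappa eta F2 a.
Proof.
apply/funext => A; rewrite /revdist /pushforward /F1 /F2 /=.
apply: (etrans (mixE _ _ _ _ _ _)); apply: esym; apply: (etrans (mixE _ _ _ _ _ _)); apply: esym.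
rewrite /dirac !indicE /=.
have pre x : (x \in revenue kappa eta a @^-1` A) = (revenue kappa eta a x \in A) by [].
rewrite !pre rev_lin rev_o.
case: (rev_uz a) => ->; first by rewrite add0r.
by rewrite addr0 addeC.
Qed.

Lemma F12 : (F1 : set (prices H R) -> \bar R) <> F2.
Proof.
have uo : uu <> oo.
  move=> /(congr1 (fun t => tnth t ord_max)); rewrite !tnth_mktuple eqxx.
  by move/eqP; rewrite oner_eq0.
have zo : zz <> oo.
  move=> /(congr1 (fun t => tnth t ord_max)); rewrite !tnth_mktuple eqxx.
  by move/eqP; rewrite oner_eq0.
move=> /(congr1 (fun f => f [set oo])) /=.
rewrite /F1 /F2 /=.
rewrite (mixE _ _ _ oo vv) (mixE _ _ _ uu zz).
rewrite /dirac !indicE.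
have -> : (oo \in [set oo]) = true by rewrite mem_set.
have -> : (uu \in [set oo]) = false by apply/negbTE/negP => /set_mem; [exact: uo].
have -> : (zz \in [set oo]) = false by apply/negbTE/negP => /set_mem; [exact: zo].
case: (vv \in [set oo]); rewrite -!EFinM -!EFinD => -[]; lra.
Qed.
End main.

Theorem proposition2 (R : realType) (H : nat) (kappa eta : R)
  (hH : (2 <= H)%N) (hkappa : 0 < kappa) (heta0 : 0 < eta) (heta1 : eta <= 1)
  (rho : (set R -> \bar R) -> \bar R)
  (sel : (bid H -> \bar R) -> bid H) (hsel : is_argmax_selection sel) :
  (exists F1 F2 : probability (prices H R) R,
     (F1 : set (prices H R) -> \bar R) <> F2 /\
     (forall a : bid H,
        rho (revdist kappa eta F1 a) = rho (revdist kappa eta F2 a)) /\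
     astar kappa eta rho sel F1 = astar kappa eta rho sel F2) /\
  ~ strictly_proper (battery_score kappa eta rho sel).
Proof.
have RE := @revdistE R H kappa eta heta0.
have AE : astar kappa eta rho sel (F1 R H eta) = astar kappa eta rho sel (F2 R H eta).
  by rewrite /astar; congr sel; apply/funext => a; rewrite RE.
split.
  exists (F1 R H eta), (F2 R H eta); split; first exact: (@F12 R H eta).
  by split => // a; rewrite RE.
move=> /(_ (F1 R H eta) (F2 R H eta)) [_ /(_ _)/esym].
have SE : battery_score kappa eta rho sel (F2 R H eta) =
          battery_score kappa eta rho sel (F1 R H eta).
  by apply/funext => p; rewrite /battery_score AE.
rewrite SE => /(_ erefl) E; apply: (@F12 R H eta); exact: E.
Qed.
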